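(* Let $\mathcal{H}$ be a collection of nonempty loopless graphs, each with an even number of edges. Let $n,m\geq 2$ be integers with $n\geq 4^m$, and let $\mathcal{G}\subseteq\mathbb{F}_2^{\binom{[n]}{2}}$ be an $\mathcal{H}$-code with $\mathbb{P}[\mathcal{G}]=\delta_n(\mathcal{H})$. Then $$\big\|\widehat{\big(\mathbb{1}_{\mathcal{G}}-\mathbb{P}[\mathcal{G}]\big)}\big\|_{\ell_\infty}\leq\delta_m(\mathcal{H})-\delta_n(\mathcal{H}).$$
   Context: Graphs: for a nonempty finite set $V$, $\binom{V}{\leq 2}$ denotes the nonempty subsets of $V$ of size at most 2 and $\binom{V}{2}$ those of size 2. A graph on $V$ is a subset of $\binom{V}{\leq 2}$ (size-2 elements are edges, size-1 elements self-loops); loopless means no self-loops. $V(G)$ is the union of members of $G$. Graphs $G,H$ are isomorphic if there is a bijection $\phi\colon V(G)\to V(H)$ with $\{x,y\}\in G\iff\{\phi(x),\phi(y)\}\in H$ for all $x,y\in V(G)$. $G_1+G_2$ is symmetric difference. Loopless graphs on $[n]$ are identified with $\mathbb{F}_2^{\binom{[n]}{2}}$; $\mathbb{P}$ is the uniform probability measure there. An $\mathcal{H}$-code is a family $\mathcal{G}$ of graphs on a common vertex set such that $G_1+G_2$ is not isomorphic to any graph of $\mathcal{H}$ for all $G_1,G_2\in\mathcal{G}$; $\delta_n(\mathcal{H})$ is the maximum density $\mathbb{P}[\mathcal{G}]$ of an $\mathcal{H}$-code $\mathcal{G}\subseteq\mathbb{F}_2^{\binom{[n]}{2}}$. Fourier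 transform on $\mathbb{F}_2^{\mathcal{I}}$: $\widehat f(\xi)=\mathbb{E}_x[f(x)(-1)^{|x\cap\xi|}]$ (expectation w.r.t. uniform measure), and $\|\widehat f\|_{\ell_\infty}=\max_\xi|\widehat f(\xi)|$. *)

(* Defs.v *)
From HB Require Import structures.
From mathcomp Require Import all_boot all_order all_algebra.
From mathcomp Require Import boolp.
Set Implicit Arguments. Unset Strict Implicit. Unset Printing Implicit Defensive.
Import Order.TTheory GRing.Theory Num.Theory.
Local Open Scope ring_scope.

Definition edge (n : nat) := {e : {set 'I_n} | #|e| == 2%N}.

(* Loopless graphs on [n] = elements of F_2^{binom([n],2)} = sets of edges. *)
Definition graph (n : nat) := {set edge n}.

Definition vtx (n : nat) (G : graph n) : {set 'I_n} :=
  \bigcup_(e in G) val e.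

(* {x,y} in G  (false when x = y, since edges have size 2). *)
Definition adj (n : nat) (G : graph n) (x y : 'I_n) : bool :=
  [exists e in G, val e == [set x; y]].

Definition gsum (n : nat) (G1 G2 : graph n) : graph n :=
  (G1 :\: G2) :|: (G2 :\: G1).

Definition giso (n k : nat) (G : graph n) (H : graph k) : Prop :=
  exists f : 'I_n -> 'I_k,
    {in vtx G &, injective f} /\ f @: vtx G = vtx H /\
    (forall x y, x \in vtx G -> y \in vtx G -> adj G x y = adj H (f x) (f y)).

Definition gcoll := forall k : nat, graph k -> Prop.

Definition is_code (Hc : gcoll) (n : nat) (Gs : {set graph n}) : Prop :=
  forall G1 G2, G1 \in Gs -> G2 \in Gs ->
    forall k (H : graph k), Hc k H -> ~ giso (gsum G1 G2) H.

Definition density (n : nat) (Gs : {set graph n}) : rat :=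
  #|Gs|%:R / #|{: graph n}|%:R.

(* delta_n(H): maximum density of an H-code (the empty family is a code). *)
Definition delta (Hc : gcoll) (n : nat) : rat :=
  (\max_(Gs : {set graph n} | `[< is_code Hc Gs >]) #|Gs|)%:R
    / #|{: graph n}|%:R.

Definition fourier (n : nat) (f : graph n -> rat) (xi : graph n) : rat :=
  (\sum_(x : graph n) f x * (-1) ^+ #|x :&: xi|) / #|{: graph n}|%:R.

Definition linf (n : nat) (F : graph n -> rat) : rat :=
  \big[Num.max/0]_(xi : graph n) `|F xi|.

(* Main.v *)
Require Import Defs.
From HB Require Import structures.
From mathcomp Require Import all_boot all_order all_algebra.
From mathcomp Require Import boolp.
From mathcomp Require Import zify ring lra.
Import Order.TTheory GRing.Theory Num.Theory.
Set Implicit Arguments. Unset Strict Implicit. Unset Printing Implicit Defensive.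

Lemma ramsey_aux (T : finType) (r : rel T) : symmetric r ->
  forall s a b (A : {set T}), a + b = s -> 2 ^ s <= #|A| ->
  exists S : {set T}, S \subset A /\
   ((#|S| = a /\ {in S &, forall x y, x != y -> r x y}) \/
    (#|S| = b /\ {in S &, forall x y, x != y -> ~~ r x y})).
Proof.
move=> rs; elim=> [|s IH] a b A hs hA.
  exists set0; rewrite sub0set cards0; split=> //; left; split; first lia.
  by move=> x y; rewrite inE.
case: a hs => [|a] hs.
  by exists set0; rewrite sub0set cards0; split=> //; left; split=> // x y; rewrite inE.
case: b hs => [|b] hs.
  by exists set0; rewrite sub0set cards0; split=> //; right; split=> // x y; rewrite inE.
have /set0Pn [v vA] : A != set0.
  by apply/negP=> /eqP A0; move: hA; rewrite A0 cards0 leqn0 expn_eq0.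
set N := [set y in A | (y != v) && r v y].
set M := [set y in A | (y != v) && ~~ r v y].
have hNM : #|N| + #|M| = #|A| - 1.
  have -> : #|A| - 1 = #|A :\ v| by rewrite (cardsD1 v A) vA; lia.
  rewrite -(cardsID N (A :\ v)).
  have e1 : (A :\ v) :&: N = N.
    by apply/setP=> y; rewrite !inE; case: (y \in A); case: (y == v); case: (r v y).
  have e2 : (A :\ v) :\: N = M.
    by apply/setP=> y; rewrite !inE; case: (y \in A); case: (y == v); case: (r v y).
  by rewrite e1 e2.
move: hA; rewrite expnS => hA.
have [hN | hM] : 2 ^ s <= #|N| \/ 2 ^ s <= #|M| by lia.
- have [S [SN [[cS cl] | [cS ind]]]] := IH a b.+1 N ltac:(lia) hN.
  + have vS : v \notin S.
      by apply/negP=> /(subsetP SN); rewrite !inE eqxx andbF.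
    exists (v |: S); split.
      rewrite subUset sub1set vA /=; apply: subset_trans SN _.
      by apply/subsetP=> y; rewrite inE => /andP[].
    left; split; first by rewrite cardsU1 vS cS.
    have Nv : forall y, y \in S -> y != v /\ r v y.
      by move=> y /(subsetP SN); rewrite inE => /andP[_ /andP[]].
    move=> x y; rewrite !inE => /orP[/eqP->|xS] /orP[/eqP->|yS].
    * by rewrite eqxx.
    * by move=> _; case: (Nv y yS).
    * by move=> _; case: (Nv x xS) => _; rewrite rs.
    * exact: cl.
  + exists S; split; last by right.
    apply: subset_trans SN _; by apply/subsetP=> y; rewrite inE => /andP[].
- have [S [SM [[cS cl] | [cS ind]]]] := IH a.+1 b M ltac:(lia) hM.
  + exists S; split; last by left.
    apply: subset_trans SM _; by apply/subsetP=> y; rewrite inE => /andP[].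
  + have vS : v \notin S.
      by apply/negP=> /(subsetP SM); rewrite !inE eqxx andbF.
    exists (v |: S); split.
      rewrite subUset sub1set vA /=; apply: subset_trans SM _.
      by apply/subsetP=> y; rewrite inE => /andP[].
    right; split; first by rewrite cardsU1 vS cS.
    have Mv : forall y, y \in S -> y != v /\ ~~ r v y.
      by move=> y /(subsetP SM); rewrite inE => /andP[_ /andP[]].
    move=> x y; rewrite !inE => /orP[/eqP->|xS] /orP[/eqP->|yS].
    * by rewrite eqxx.
    * by move=> _; case: (Mv y yS).
    * by move=> _; case: (Mv x xS) => _; rewrite rs.
    * exact: ind.
Qed.

Lemma emap_proof m n (s : 'I_m -> 'I_n) (hs : injective s) (e : edge m) :
  #|[set s x | x in val e]| == 2.
Proof. by rewrite card_imset //; exact: (valP e). Qed.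

Definition emap m n (s : 'I_m -> 'I_n) (hs : injective s) (e : edge m) : edge n :=
  exist (fun A : {set 'I_n} => #|A| == 2) _ (emap_proof hs e).

Lemma emap_inj m n (s : 'I_m -> 'I_n) (hs : injective s) : injective (emap hs).
Proof.
move=> e1 e2 /(congr1 val) /= h; apply: val_inj; exact: (imset_inj hs h).
Qed.

Definition gmap m n (s : 'I_m -> 'I_n) (hs : injective s) (g : graph m) : graph n :=
  [set emap hs e | e in g].

Lemma gmap_inj m n (s : 'I_m -> 'I_n) (hs : injective s) : injective (gmap hs).
Proof. move=> a b; rewrite /gmap; apply: imset_inj; exact: emap_inj. Qed.

Lemma gmap_gsum m n (s : 'I_m -> 'I_n) (hs : injective s) (a b : graph m) :
  gmap hs (gsum a b) = gsum (gmap hs a) (gmap hs b).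
Proof.
apply/setP=> e; rewrite /gsum !inE.
case: (boolP (e \in [set emap hs e | e in setT])) => [/imsetP [e' _ ->]| ne].
  rewrite !mem_imset; try exact: emap_inj.
  by rewrite !inE.
have nin : forall g : graph m, e \notin gmap hs g.
  move=> g; apply/negP=> /imsetP [e' _ he]; case/negP: ne; rewrite he.
  by apply/imsetP; exists e'.
by rewrite !(negbTE (nin _)).
Qed.

Lemma card_gmap m n (s : 'I_m -> 'I_n) (hs : injective s) (g : graph m) :
  #|gmap hs g| = #|g|.
Proof. by rewrite card_imset //; exact: emap_inj. Qed.

Lemma imset_pair (T T' : finType) (f : T -> T') (x y : T) :
  [set f z | z in [set x; y]] = [set f x; f y].
Proof. by rewrite imsetU !imset_set1. Qed.

Lemma adj_gmap m n (s : 'I_m -> 'I_n) (hs : injective s) (g : graph m) x y :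
  adj (gmap hs g) (s x) (s y) = adj g x y.
Proof.
apply/existsP/existsP=> [[e /andP [/imsetP [e' e'g ->] /eqP /= he]] | [e /andP [eg /eqP he]]].
  exists e'; rewrite e'g /=; apply/eqP; apply: (imset_inj hs).
  by rewrite he imset_pair.
exists (emap hs e); rewrite (mem_imset _ _ (@emap_inj _ _ _ hs)) eg /=.
by rewrite he imset_pair.
Qed.

Lemma vtx_gmap m n (s : 'I_m -> 'I_n) (hs : injective s) (g : graph m) :
  vtx (gmap hs g) = [set s x | x in vtx g].
Proof.
apply/setP=> y; apply/bigcupP/imsetP.
  move=> [e /imsetP [e' e'g ->] /= /imsetP [x xe ->]].
  by exists x => //; apply/bigcupP; exists e'.
move=> [x /bigcupP [e eg xe] ->].
exists (emap hs e); first by rewrite (mem_imset _ _ (@emap_inj _ _ _ hs)).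
by rewrite /=; apply/imsetP; exists x.
Qed.

Lemma giso_gmap m n k (s : 'I_m -> 'I_n) (hs : injective s) (d : 'I_m)
  (g : graph m) (H : graph k) : giso g H -> giso (gmap hs g) H.
Proof.
move=> [f [finj [fim fadj]]].
pose sinv (y : 'I_n) := if [pick i | s i == y] is Some i then i else d.
have sK : forall i, sinv (s i) = i.
  move=> i; rewrite /sinv; case: pickP => [j /eqP /hs //|/(_ i)]; by rewrite eqxx.
exists (fun y => f (sinv y)); split; [|split].
- rewrite vtx_gmap => _ _ /imsetP [x xg ->] /imsetP [y yg ->].
  by rewrite !sK => /finj -> //.
- rewrite vtx_gmap -imset_comp -fim; apply: eq_imset=> x /=; by rewrite sK.
- rewrite vtx_gmap => _ _ /imsetP [x xg ->] /imsetP [y yg ->].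
  by rewrite adj_gmap !sK fadj.
Qed.

Lemma in_vtx n (G : graph n) (e : edge n) x : e \in G -> x \in val e -> x \in vtx G.
Proof. by move=> eG xe; apply/bigcupP; exists e. Qed.

Lemma edge2 n (e : edge n) : exists x y, x != y /\ val e = [set x; y].
Proof. exact/cards2P/(valP e). Qed.

Lemma giso_card n k (G : graph n) (H : graph k) : giso G H -> #|G| = #|H|.
Proof.
move=> [f [finj [fim fadj]]].
have -> : #|G| = #|[set val e | e in G]| by rewrite card_imset //; exact: val_inj.
have -> : #|H| = #|[set val e | e in H]| by rewrite card_imset //; exact: val_inj.
have eqV : [set val e | e in H] = [set [set f x | x in A] | A : {set 'I_n} in [set val e | e in G]].
  apply/setP=> B; apply/imsetP/imsetP.
  - move=> [e eH ->]; have [x' [y' [_ he]]] := edge2 e.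
    have : x' \in vtx H by apply: (in_vtx eH); rewrite he !inE eqxx.
    have : y' \in vtx H by apply: (in_vtx eH); rewrite he !inE eqxx orbT.
    rewrite -fim => /imsetP [y yG hy] /imsetP [x xG hx]; rewrite {}hx {}hy in he.
    have : adj H (f x) (f y) by apply/existsP; exists e; rewrite eH he eqxx.
    rewrite -fadj // => /existsP [e0 /andP [e0G /eqP he0]].
    exists (val e0); first by apply: imset_f.
    by rewrite he he0 imset_pair.
  - move=> [A /imsetP [e eG ->] ->]; have [x [y [_ he]]] := edge2 e.
    have xG : x \in vtx G by apply: (in_vtx eG); rewrite he !inE eqxx.
    have yG : y \in vtx G by apply: (in_vtx eG); rewrite he !inE eqxx orbT.
    have : adj G x y by apply/existsP; exists e; rewrite eG he eqxx.
    rewrite fadj // => /existsP [e0 /andP [e0H /eqP he0]].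
    by exists e0; rewrite // he0 he imset_pair.
rewrite eqV [RHS]card_in_imset //.
move=> A B /imsetP [e eG ->] /imsetP [e' e'G ->] h.
have sub : forall z e1, e1 \in G -> z \in val e1 -> z \in vtx G.
  by move=> z e1 e1G; apply: in_vtx.
apply/setP=> z; apply/idP/idP=> zA.
- have : f z \in f @: val e' by rewrite -h; apply: imset_f.
  move=> /imsetP [w wB /finj]; rewrite -> (sub _ _ eG zA), (sub _ _ e'G wB).
  by move=> /(_ isT isT) ->.
- have : f z \in f @: val e by rewrite h; apply: imset_f.
  move=> /imsetP [w wB /finj]; rewrite -> (sub _ _ e'G zA), (sub _ _ eG wB).
  by move=> /(_ isT isT) ->.
Qed.

Local Open Scope ring_scope.

Definition chi n (xi x : graph n) : rat := (-1) ^+ #|x :&: xi|.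

Lemma gsumK n (a : graph n) : involutive (fun x : graph n => gsum x a).
Proof. by move=> x; apply/setP=> e; rewrite !inE; case: (e \in x); case: (e \in a). Qed.

Lemma gsum_inj n (a : graph n) : injective (fun x : graph n => gsum x a).
Proof. exact: inv_inj (gsumK a). Qed.

Lemma card_gsum (T : finType) (A B : {set T}) :
  (#|(A :\: B) :|: (B :\: A)| + 2 * #|A :&: B| = #|A| + #|B|)%N.
Proof.
rewrite cardsU.
have -> : (A :\: B) :&: (B :\: A) = set0.
  by apply/setP=> e; rewrite !inE; case: (e \in A); case: (e \in B).
rewrite cards0 subn0 -(cardsID B A) -(cardsID A B) setIC.
idtac.
lia.
Qed.

Lemma sign_gsum (T : finType) (A B : {set T}) :
  (-1) ^+ #|(A :\: B) :|: (B :\: A)| = (-1) ^+ #|A| * (-1) ^+ #|B| :> rat.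
Proof.
by rewrite -exprD -card_gsum exprD exprM sqrrN !expr1n mulr1.
Qed.

Lemma chiD n (xi x u : graph n) : chi xi (gsum x u) = chi xi x * chi xi u.
Proof.
rewrite /chi -sign_gsum; congr (_ ^+ _); apply: eq_card => e.
by rewrite !inE; case: (e \in x); case: (e \in u); case: (e \in xi).
Qed.

Lemma chi_sign n (xi x : graph n) : chi xi x = 1 \/ chi xi x = -1.
Proof. by rewrite /chi -signr_odd; case: odd; [right|left]. Qed.

Lemma sum_chi0 n (xi : graph n) : xi != set0 -> \sum_x chi xi x = 0.
Proof.
case/set0Pn=> e exi.
have h1 : chi xi [set e] = -1.
  rewrite /chi (_ : [set e] :&: xi = [set e]) ?cards1 ?expr1 //.
  by apply/setP=> y; rewrite !inE; case: eqP => // ->.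
have : \sum_x chi xi x = - \sum_x chi xi x.
  rewrite {1}(reindex_inj (@gsum_inj n [set e])) /=.
  by rewrite -sumrN; apply: eq_bigr=> x _; rewrite chiD h1 mulrN1.
move=> h; lra.
Qed.

Lemma sum_ind_card (T : finType) (U : {set T}) (P : pred T) :
  \sum_(u in U) (P u)%:R = #|[set u in U | P u]|%:R :> rat.
Proof.
rewrite -sum1_card natr_sum big_mkcond /= [RHS]big_mkcond /=.
by apply: eq_bigr=> u _; rewrite !inE; case: (u \in U); case: (P u).
Qed.

Lemma sum_ind_all (T : finType) (A : {set T}) :
  \sum_x (x \in A)%:R = #|A|%:R :> rat.
Proof.
rewrite -sum1_card natr_sum [RHS]big_mkcond /=.
by apply: eq_bigr=> x _; case: (x \in A).
Qed.

Lemma main_bound n (xi : graph n) (Gs U : {set graph n}) (beta : rat) :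
  xi != set0 -> U != set0 -> (forall u, u \in U -> chi xi u = 1) ->
  (forall x, #|[set u in U | gsum x u \in Gs]|%:R <= beta * #|U|%:R) ->
  `|\sum_x (x \in Gs)%:R * chi xi x| <= beta * #|{: graph n}|%:R - #|Gs|%:R.
Proof.
move=> xi0 U0 chiU hb.
set S := \sum_x _.
pose a x := \sum_(u in U) (gsum x u \in Gs)%:R : rat.
have ha x : a x = #|[set u in U | gsum x u \in Gs]|%:R by rewrite /a sum_ind_card.
have e1 : #|U|%:R * S = \sum_x chi xi x * a x.
  have -> : #|U|%:R * S = \sum_(u in U) S by rewrite sumr_const mulr_natl.
  rewrite (eq_bigr (fun u => \sum_x (gsum x u \in Gs)%:R * chi xi x)); last first.
    move=> u uU; rewrite /S (reindex_inj (@gsum_inj n u)) /=.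
    by apply: eq_bigr=> x _; rewrite chiD (chiU u uU) mulr1.
  rewrite exchange_big /=; apply: eq_bigr=> x _; rewrite /a mulr_sumr.
  by apply: eq_bigr=> u _; rewrite mulrC.
have e2 : \sum_x a x = #|U|%:R * #|Gs|%:R.
  rewrite /a exchange_big /= [RHS]mulrC mulr_natr -sumr_const.
  apply: eq_bigr=> u _; rewrite (reindex_inj (@gsum_inj n u)) /=.
  under eq_bigr do rewrite gsumK.
  exact: sum_ind_all.
have e3 : \sum_(x : graph n) (1 : rat) = #|{: graph n}|%:R.
  by rewrite sumr_const.
have sc := sum_chi0 xi0.
have Upos : 0 < #|U|%:R :> rat.
  by rewrite ltr0n; case/set0Pn: U0 => u uU; apply/card_gt0P; exists u.
have up : \sum_x (chi xi x + 1) * a x <= beta * #|U|%:R * #|{: graph n}|%:R.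
  apply: le_trans (_ : \sum_x (chi xi x + 1) * (beta * #|U|%:R) <= _).
    apply: ler_sum=> x _; apply: ler_wpM2l.
      by case: (chi_sign xi x)=> ->; lra.
    by rewrite ha.
  rewrite -mulr_suml big_split /= sc e3; lra.
have lo : \sum_x (1 - chi xi x) * a x <= beta * #|U|%:R * #|{: graph n}|%:R.
  apply: le_trans (_ : \sum_x (1 - chi xi x) * (beta * #|U|%:R) <= _).
    apply: ler_sum=> x _; apply: ler_wpM2l.
      by case: (chi_sign xi x)=> ->; lra.
    by rewrite ha.
  rewrite -mulr_suml big_split /= sumrN sc e3; lra.
have up' : \sum_x (chi xi x + 1) * a x = #|U|%:R * S + #|U|%:R * #|Gs|%:R.
  by rewrite e1 -e2 -big_split /=; apply: eq_bigr=> x _; ring.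
have lo' : \sum_x (1 - chi xi x) * a x = #|U|%:R * #|Gs|%:R - #|U|%:R * S.
  by rewrite e1 -e2 -sumrB /=; apply: eq_bigr=> x _; ring.
rewrite up' in up; rewrite lo' in lo.
set u := #|U|%:R in Upos up lo *.
have h1 : S <= beta * #|{: graph n}|%:R - #|Gs|%:R.
  rewrite -(ler_pM2l Upos); nra.
have h2 : - S <= beta * #|{: graph n}|%:R - #|Gs|%:R.
  rewrite -(ler_pM2l Upos); nra.
rewrite ler_norml; lra.
Qed.

Local Close Scope ring_scope.

Lemma odd_gsum n (a b : graph n) : odd #|gsum a b| = odd #|a| (+) odd #|b|.
Proof.
have := congr1 odd (card_gsum a b); rewrite oddD oddM /= addbF oddD.
by move=> <-.
Qed.

Lemma gsumxx n (x a b : graph n) : gsum (gsum x a) (gsum x b) = gsum a b.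
Proof.
by apply/setP=> e; rewrite !inE; case: (e \in x); case: (e \in a); case: (e \in b).
Qed.

Definition Mmax (Hc : gcoll) m := \max_(Gs : {set graph m} | `[< is_code Hc Gs >]) #|Gs|.

Lemma Mmax_ge (Hc : gcoll) m (C : {set graph m}) : is_code Hc C -> #|C| <= Mmax Hc m.
Proof. by move=> hC; apply: leq_bigmax_cond; apply/asboolP. Qed.

Lemma noiso_odd (Hc : gcoll) n (g : graph n) :
  (forall k (H : graph k), Hc k H -> H != set0 /\ ~~ odd #|H|) ->
  odd #|g| -> forall k (H : graph k), Hc k H -> ~ giso g H.
Proof.
move=> hH og k H hk /giso_card ec; have [_ ] := hH k H hk.
by rewrite -ec og.
Qed.

Lemma fiber_noiso (Hc : gcoll) n m (Gs : {set graph n}) (s : 'I_m -> 'I_n)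
  (hs : injective s) (d : 'I_m) (x : graph n) (g1 g2 : graph m) :
  is_code Hc Gs -> gsum x (gmap hs g1) \in Gs -> gsum x (gmap hs g2) \in Gs ->
  forall k (H : graph k), Hc k H -> ~ giso (gsum g1 g2) H.
Proof.
move=> code h1 h2 k H hk iso; apply: (code _ _ h1 h2 k H hk).
rewrite gsumxx -gmap_gsum; exact: giso_gmap d _ _ iso.
Qed.

Definition rho m (e0 g : graph m) := if odd #|g| then gsum g e0 else g.

Lemma dbl m (e0 : graph m) (C : {set graph m}) : #|e0| = 1%N ->
  {subset C <= [set g : graph m | ~~ odd #|g|]} ->
  #|[set g : graph m | rho e0 g \in C]| = (2 * #|C|)%N.
Proof.
move=> h1 CE.
rewrite -(cardsID [set g : graph m | ~~ odd #|g|]).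
have -> : [set g : graph m | rho e0 g \in C] :&: [set g : graph m | ~~ odd #|g|] = C.
  apply/setP=> g; rewrite !inE /rho; case: (boolP (odd #|g|)) => og /=.
    by rewrite andbF; apply/esym/negP=> /CE; rewrite inE og.
  by rewrite andbT.
have -> : [set g : graph m | rho e0 g \in C] :\: [set g : graph m | ~~ odd #|g|] =
          [set gsum c e0 | c in C].
  apply/setP=> g; rewrite !inE /rho; apply/idP/imsetP.
    case: (boolP (odd #|g|)) => og //= gC.
    by exists (gsum g e0) => //; rewrite gsumK.
  move=> [c cC ->]; have := CE c cC; rewrite inE => oc.
  by rewrite odd_gsum h1 (negbTE oc) /= gsumK cC.
rewrite card_imset; last exact: gsum_inj.
by rewrite mul2n addnn.
Qed.

Lemma chi_indep n m (xi : graph n) (s : 'I_m -> 'I_n) (hs : injective s) (g : graph m) :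
  (forall i j, i != j -> ~~ adj xi (s i) (s j)) -> chi xi (gmap hs g) = 1%R.
Proof.
move=> ind; rewrite /chi (_ : gmap hs g :&: xi = set0) ?cards0 ?expr0 //.
apply/setP=> e; rewrite !inE; apply/negP=> /andP [/imsetP [e' _ ->] exi].
have [i [j [ij he]]] := edge2 e'.
case/negP: (ind i j ij); apply/existsP; exists (emap hs e').
by rewrite exi /= he imset_pair.
Qed.

Lemma chi_clique n m (xi : graph n) (s : 'I_m -> 'I_n) (hs : injective s) (g : graph m) :
  (forall i j, i != j -> adj xi (s i) (s j)) -> ~~ odd #|g| -> chi xi (gmap hs g) = 1%R.
Proof.
move=> cl og; rewrite /chi (_ : gmap hs g :&: xi = gmap hs g).
  by rewrite card_gmap -signr_odd (negbTE og).
apply/setIidPl/subsetP=> e /imsetP [e' _ ->].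
have [i [j [ij he]]] := edge2 e'.
have /existsP [e'' /andP [e''xi /eqP he'']] := cl i j ij.
suff -> : emap hs e' = e'' by [].
by apply: val_inj; rewrite /= he he'' imset_pair.
Qed.

Lemma count_fiber n m (Gs : {set graph n}) (s : 'I_m -> 'I_n) (hs : injective s)
  (W : {set graph m}) (x : graph n) :
  #|[set u in [set gmap hs g | g in W] | gsum x u \in Gs]| =
  #|[set g in W | gsum x (gmap hs g) \in Gs]|.
Proof.
have -> : [set u in [set gmap hs g | g in W] | gsum x u \in Gs] =
  [set gmap hs g | g in [set g in W | gsum x (gmap hs g) \in Gs]].
  apply/setP=> u; rewrite !inE; apply/andP/imsetP.
    move=> [/imsetP [g gW ->] h]; exists g => //; by rewrite inE gW.
  move=> [g]; rewrite inE => /andP [gW h] ->; split=> //.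
  by rewrite (mem_imset _ _ (@gmap_inj _ _ _ hs)).
by rewrite card_imset //; exact: gmap_inj.
Qed.

Local Open Scope ring_scope.

Lemma gsumC n (a b : graph n) : gsum a b = gsum b a.
Proof. by apply/setP=> e; rewrite !inE; case: (e \in a); case: (e \in b). Qed.

Lemma card_graph_pos m : (0 < #|{: graph m}|)%N.
Proof. by apply/card_gt0P; exists set0. Qed.

Lemma delta_mul (Hc : gcoll) m : delta Hc m * #|{: graph m}|%:R = (Mmax Hc m)%:R.
Proof.
rewrite /delta -/(Mmax Hc m) divfK //; rewrite pnatr_eq0 -lt0n; exact: card_graph_pos.
Qed.

Lemma key (Hc : gcoll) n m (Gs : {set graph n}) (xi : graph n) :
  (forall k (H : graph k), Hc k H -> H != set0 /\ ~~ odd #|H|) ->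
  (2 <= m)%N -> (4 ^ m <= n)%N -> is_code Hc Gs -> xi != set0 ->
  `|\sum_x (x \in Gs)%:R * chi xi x| <= delta Hc m * #|{: graph n}|%:R - #|Gs|%:R.
Proof.
move=> hH m2 nm code xi0.
have rs : symmetric (adj xi).
  by move=> x y; rewrite /adj; apply: eq_existsb=> e; rewrite setUC.
have hA : (2 ^ (m + m) <= #|[set: 'I_n]|)%N.
  by rewrite cardsT card_ord addnn -mul2n expnM.
have [S [_ hS]] := ramsey_aux rs (erefl (m + m)) hA.
have m0 : (0 < m)%N by lia.
have m1 : (1 < m)%N by lia.
pose d : 'I_m := Ordinal m0.
have [cS P] : #|S| = m /\ ((forall x y, x \in S -> y \in S -> x != y -> adj xi x y) \/
                         (forall x y, x \in S -> y \in S -> x != y -> ~~ adj xi x y)).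
  by case: hS => [[c h]|[c h]]; split=> //; [left|right].
pose s (i : 'I_m) : 'I_n := enum_val (cast_ord (esym cS) i).
have hs : injective s by move=> i j /enum_val_inj /cast_ord_inj.
have sS : forall i, s i \in S by move=> i; exact: enum_valP.
have sne : forall i j, i != j -> s i != s j.
  by move=> i j ij; apply: contra ij => /eqP /hs ->.
have Npos : (0 < #|{: graph m}|)%N := card_graph_pos m.
case: P => [cl | ind].
-
  pose i0 : 'I_m := Ordinal m0.
  pose i1 : 'I_m := Ordinal m1.
  have e_prf : #|[set i0; i1]| == 2 by rewrite cards2.
  pose e0 : graph m := [set exist (fun A : {set 'I_m} => #|A| == 2) _ e_prf].
  have he0 : #|e0| = 1%N by rewrite cards1.
  have rhoE : forall g, ~~ odd #|rho e0 g|.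
    move=> g; rewrite /rho; case: (boolP (odd #|g|)) => og //.
    by rewrite odd_gsum og he0.
  pose W := [set g : graph m | ~~ odd #|g|].
  have hW : (#|{: graph m}| = 2 * #|W|)%N.
    rewrite -(dbl (C := W) he0); last by move=> g.
    have -> : [set g : graph m | rho e0 g \in W] = setT.
      by apply/setP=> g; rewrite !inE rhoE.
    by rewrite cardsT.
  apply: (main_bound (U := [set gmap hs g | g in W])) => //.
  + by apply/set0Pn; exists (gmap hs set0); apply: imset_f; rewrite inE cards0.
  + move=> u /imsetP [g gW ->]; apply: chi_clique.
      by move=> i j ij; apply: cl; rewrite ?sS ?sne.
    by move: gW; rewrite inE.
  + move=> x; rewrite count_fiber card_imset; last exact: gmap_inj.
    set C := [set g in W | _].
    have CW : {subset C <= W} by move=> g; rewrite inE => /andP [].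
    have hD : is_code Hc [set g : graph m | rho e0 g \in C].
      move=> g1 g2; rewrite !inE => /andP [_ h1] /andP [_ h2] k H hk.
      case: (boolP (odd #|g1| == odd #|g2|)) => [/eqP hp | hp].
        have -> : gsum g1 g2 = gsum (rho e0 g1) (rho e0 g2).
          rewrite /rho -hp; case: (odd #|g1|) => //.
          by rewrite (gsumC g1 e0) (gsumC g2 e0) gsumxx.
        exact: (fiber_noiso d code h1 h2).
      apply: (noiso_odd hH) hk; rewrite odd_gsum.
      by move: hp; case: (odd #|g1|); case: (odd #|g2|).
    have := Mmax_ge hD; rewrite (dbl he0 CW) => hC.
    rewrite -[#|W|%:R](@mulfK _ 2%:R) // -natrM mulnC -hW mulrA delta_mul.
    rewrite ler_pdivlMr // -natrM ler_nat; lia.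
-
  apply: (main_bound (U := [set gmap hs g | g in setT])) => //.
  + by apply/set0Pn; exists (gmap hs set0); apply: imset_f.
  + move=> u /imsetP [g _ ->]; apply: chi_indep.
    by move=> i j ij; apply: ind; rewrite ?sS ?sne.
  + move=> x; rewrite count_fiber card_imset; last exact: gmap_inj.
    rewrite cardsT delta_mul ler_nat; apply: Mmax_ge.
    move=> g1 g2; rewrite !inE => h1 h2.
    exact: (fiber_noiso d code h1 h2).
Qed.

Unset Implicit Arguments.

Theorem lemma3p4 (Hc : gcoll) (n m : nat) (Gs : {set graph n}) :
  (forall k (H : graph k), Hc k H -> H != set0 /\ ~~ odd #|H|) ->
  (2 <= m)%N -> (2 <= n)%N -> (4 ^ m <= n)%N ->
  is_code Hc Gs -> density Gs = delta Hc n ->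
  linf (fourier (fun G => (G \in Gs)%:R - density Gs))
    <= delta Hc m - delta Hc n.
Proof.
move=> hH m2 n2 nm code dens.
set N : rat := #|{: graph n}|%:R.
have Npos : 0 < N by rewrite ltr0n card_graph_pos.
have GN : #|Gs|%:R = density Gs * N by rewrite /density divfK // gt_eqF.
have four : forall xi, fourier (fun G => (G \in Gs)%:R - density Gs) xi =
   (\sum_x (x \in Gs)%:R * chi xi x - density Gs * \sum_x chi xi x) / N.
  move=> xi; rewrite /fourier -/N; apply: (congr1 (fun t => t / N)).
  rewrite mulr_sumr -sumrB.
  by apply: eq_bigr=> x _; rewrite /chi mulrBl.
have nz : forall xi, xi != set0 ->
    `|fourier (fun G => (G \in Gs)%:R - density Gs) xi| <= delta Hc m - delta Hc n.
  move=> xi xi0; rewrite four sum_chi0 // mulr0 subr0 normrM normfV (gtr0_norm Npos).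
  rewrite ler_pdivrMr //.
  have := key hH m2 nm code xi0; rewrite -/N GN dens => h.
  by rewrite mulrBl.
have n0 : (0 < n)%N by lia.
have n1 : (1 < n)%N by lia.
have e_prf : #|[set (Ordinal n0); (Ordinal n1)]| == 2 by rewrite cards2.
pose xi1 : graph n := [set exist (fun A : {set 'I_n} => #|A| == 2) _ e_prf].
have b0 : 0 <= delta Hc m - delta Hc n.
  apply: le_trans (nz xi1 _); first exact: normr_ge0.
  by apply/set0Pn; exists (exist (fun A : {set 'I_n} => #|A| == 2) _ e_prf); rewrite inE.
rewrite /linf; apply: Order.POrderTheory.bigmax_le => // xi _.
case: (boolP (xi == set0)) => [/eqP -> | xi0]; last exact: nz.
rewrite four.
have c1 : forall x : graph n, chi set0 x = 1.
  by move=> x; rewrite /chi setI0 cards0 expr0.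
under eq_bigr do rewrite c1 mulr1.
under [\sum_x chi _ _]eq_bigr do rewrite c1.
rewrite sum_ind_all sumr_const -/N GN.
have -> : density Gs * N - density Gs * (1 *+ #|{: graph n}|) = 0.
  by rewrite -mulr_natr mul1r -/N subrr.
by rewrite mul0r normr0.
Qed.
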